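(* Let $(\lambda_k)_{k\ge1}$, $(\mu_k)_{k\ge1}$ be nonzero real numbers with $|\lambda_1|>|\mu_1|>|\lambda_2|>|\mu_2|>\dots>0$ and $\lambda_k\to0$, let $\sigma=\{\lambda_k^2:k\ge1\}\cup\{0\}$, and let $\Phi(z)=\prod_{k\ge1}\frac{z-\mu_k^2}{z-\lambda_k^2}$ for $z\in\mathbb{C}\setminus\sigma$. Then for all $z\in\mathbb{C}\setminus\sigma$ $$\Phi(z)=1-\sum_{n\ge1}\frac{a_n}{\lambda_n^2-z},\qquad\text{where}\quad a_n=(\lambda_n^2-\mu_n^2)\prod_{k\ne n}\frac{\lambda_n^2-\mu_k^2}{\lambda_n^2-\lambda_k^2},$$ with the series converging uniformly on compact subsets of $\mathbb{C}\setminus\sigma$. *)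

(* Defs.v *)
From HB Require Import structures.
From mathcomp Require Import all_boot all_order all_algebra.
From mathcomp Require Import all_classical all_reals all_analysis.
From mathcomp Require Import complex.
Set Implicit Arguments. Unset Strict Implicit. Unset Printing Implicit Defensive.
Import Order.TTheory GRing.Theory Num.Theory.
Import numFieldTopology.Exports numFieldNormedType.Exports.
Local Open Scope ring_scope.

HB.instance Definition _ (R : rcfType) :=
  PseudoPointedMetric.copy R[i] (R[i])^o.
Local Open Scope complex_scope.
Local Open Scope classical_set_scope.

Definition sigma_set (R : realType) (lam : nat -> R) : set R[i] :=
  [set z | z = 0 \/ exists k, z = ((lam k) ^+ 2)%:C].

Definition Phi_partial (R : realType) (lam mu : nat -> R) (z : R[i]) (N : nat) : R[i] :=
  \prod_(k < N) ((z - ((mu k) ^+ 2)%:C) / (z - ((lam k) ^+ 2)%:C)).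

Definition Phi (R : realType) (lam mu : nat -> R) (z : R[i]) : R[i] :=
  lim (Phi_partial lam mu z @ \oo).

Definition a_partial (R : realType) (lam mu : nat -> R) (n N : nat) : R :=
  ((lam n) ^+ 2 - (mu n) ^+ 2) *
  \prod_(k < N | k != n :> nat)
     (((lam n) ^+ 2 - (mu k) ^+ 2) / ((lam n) ^+ 2 - (lam k) ^+ 2)).

Definition a_coef (R : realType) (lam mu : nat -> R) (n : nat) : R :=
  lim (a_partial lam mu n @ \oo).

Definition S_partial (R : realType) (lam mu : nat -> R) (z : R[i]) (N : nat) : R[i] :=
  \sum_(n < N) ((a_coef lam mu n)%:C / (((lam n) ^+ 2)%:C - z)).

(* Main.v *)
Require Import Defs.
From HB Require Import structures.
From mathcomp Require Import all_boot all_order all_algebra.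
From mathcomp Require Import all_classical all_reals all_analysis.
From mathcomp Require Import complex.
From mathcomp Require Import ring lra.
Import Order.TTheory GRing.Theory Num.Theory.
Import numFieldTopology.Exports numFieldNormedType.Exports.
Local Open Scope ring_scope.
Local Open Scope complex_scope.
Local Open Scope classical_set_scope.
Set Implicit Arguments. Unset Strict Implicit. Unset Printing Implicit Defensive.
Definition cpart (F : fieldType) (al be : nat -> F) (N n : nat) : F :=
  (al n - be n) * \prod_(k < N | k != n :> nat) ((al n - be k) / (al n - al k)).

Lemma cpartS (F : fieldType) (al be : nat -> F) N n : (n < N)%N ->
  cpart al be N.+1 n = cpart al be N n * ((al n - be N) / (al n - al N)).
Proof.
move=> nN; rewrite /cpart big_mkcond big_ord_recr /= -big_mkcond /=.
by rewrite (gtn_eqF nN) mulrA.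
Qed.

Lemma cpartN (F : fieldType) (al be : nat -> F) N :
  cpart al be N.+1 N = (al N - be N) * \prod_(k < N) ((al N - be k) / (al N - al k)).
Proof.
rewrite /cpart big_mkcond big_ord_recr /= eqxx mulr1; congr (_ * _).
by apply: eq_bigr => k _; rewrite (ltn_eqF (ltn_ord k)).
Qed.

Lemma pfrac (F : fieldType) (al be : nat -> F) N : 
  (forall i j, (i < N)%N -> (j < N)%N -> i != j -> al i != al j) ->
  forall z, (forall k, (k < N)%N -> z != al k) ->
  \prod_(k < N) ((z - be k) / (z - al k)) =
  1 - \sum_(n < N) cpart al be N n / (al n - z).
Proof.
elim: N => [|N IH] Hal z Hz; first by rewrite !big_ord0 subr0.
have HalN : forall i j, (i < N)%N -> (j < N)%N -> i != j -> al i != al j.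
  by move=> i j iN jN; apply: Hal; apply: ltnW.
have HzN : forall k, (k < N)%N -> z != al k by move=> k kN; apply: Hz; apply: ltnW.
have zN : z - al N != 0 by rewrite subr_eq0; apply: Hz.
have Nz : al N - z != 0 by rewrite subr_eq0 eq_sym; apply: Hz.
rewrite big_ord_recr /= IH // big_ord_recr /= cpartN.
rewrite IH //; last first.
  move=> k kN; rewrite eq_sym; apply: Hal; [exact: ltnW | exact: ltnSn | by rewrite ltn_eqF].
set Y := \sum_(n < N) cpart al be N n / (al n - al N).
have E1 : \sum_(i < N) cpart al be N.+1 i / (al i - z) =
  \sum_(i < N) (cpart al be N i / (al i - z)) * ((z - be N) / (z - al N)) 
   + Y * ((al N - be N) / (al N - z)).
  rewrite /Y mulr_suml -big_split /=; apply: eq_bigr => n _.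
  have nN := ltn_ord n.
  have n1 : al n - al N != 0.
    rewrite subr_eq0; apply: Hal; [exact: ltnW | exact: ltnSn | by rewrite (ltn_eqF nN)].
  have n2 : al n - z != 0 by rewrite subr_eq0 eq_sym; apply: HzN.
  rewrite cpartS //; field.
  by rewrite n1 n2 zN Nz.
rewrite E1 -mulr_suml.
set S := \sum_(i < N) _.
field; by rewrite zN Nz.
Qed.
Notation normc := ComplexField.Normc.normc.

Lemma normCE (R : realType) (x : R[i]) : `|x| = (normc x)%:C.
Proof. by case: x. Qed.

Lemma nc_ge0 (R : realType) (x : R[i]) : 0 <= normc x.
Proof. by case: x => a b; rewrite /= sqrtr_ge0. Qed.

Lemma nc_tri (R : realType) (x y : R[i]) : normc (x + y) <= normc x + normc y.
Proof. exact: le_normcD. Qed.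

Lemma nc_N (R : realType) (x : R[i]) : normc (- x) = normc x.
Proof. exact: normcN. Qed.

Lemma nc_M (R : realType) (x y : R[i]) : normc (x * y) = normc x * normc y.
Proof. exact: ComplexField.Normc.normcM. Qed.

Lemma nc_V (R : realType) (x : R[i]) : normc (x^-1) = (normc x)^-1.
Proof. exact: ComplexField.Normc.normcV. Qed.

Lemma nc_real (R : realType) (r : R) : normc (r%:C) = `|r|.
Proof. by rewrite /= expr0n /= addr0 sqrtr_sqr. Qed.

Lemma nc_Re (R : realType) (x : R[i]) : `|complex.Re x| <= normc x.
Proof.
case: x => a b /=; rewrite -sqrtr_sqr; apply: ler_wsqrtr.
by rewrite lerDl sqr_ge0.
Qed.

Lemma nc_Im (R : realType) (x : R[i]) : `|complex.Im x| <= normc x.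
Proof.
case: x => a b /=; rewrite -sqrtr_sqr; apply: ler_wsqrtr.
by rewrite lerDr sqr_ge0.
Qed.

Lemma nc_cplx (R : realType) (a b : R) : normc (a +i* b) <= `|a| + `|b|.
Proof.
have -> : a +i* b = a%:C + (0 +i* b) by apply/eqP; rewrite eq_complex /= addr0 add0r !eqxx.
apply: le_trans (nc_tri _ _) _; rewrite nc_real lerD2l /=.
by rewrite expr0n /= add0r sqrtr_sqr.
Qed.

Lemma nc_sum (R : realType) N (f : nat -> R[i]) :
  normc (\sum_(n < N) f n) <= \sum_(n < N) normc (f n).
Proof.
elim: N => [|N IH]; first by rewrite !big_ord0 /= expr0n /= addr0 sqrtr0.
rewrite !big_ord_recr /=; apply: le_trans (nc_tri _ _) _.
by rewrite lerD2r.
Qed.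

Lemma cauchyR (R : realType) (u : nat -> R) :
  (forall e, 0 < e -> exists N, forall m n, (N <= m)%N -> (N <= n)%N -> `|u m - u n| < e) ->
  cvgn u.
Proof.
move=> H; apply/cauchy_cvgP/cauchy_ballP => e e0.
have [N HN] := H e e0.
exists (u @` [set n | (N <= n)%N], u @` [set n | (N <= n)%N]).
  by split; exists N => // n /= Nn; exists n.
by case=> x y /= [[m Hm <-] [n Hn <-]]; rewrite /ball /=; apply: HN.
Qed.

Lemma cauchyC (R : realType) (u : nat -> R[i]) :
  (forall e, 0 < e -> exists N, forall m n, (N <= m)%N -> (N <= n)%N -> normc (u m - u n) < e) ->
  exists l, forall e, 0 < e -> \forall N \near \oo, normc (l - u N) < e.
Proof.
move=> H.
have cRe : cvgn (fun n => complex.Re (u n)).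
  apply: cauchyR => e /H [N HN]; exists N => m n Hm Hn.
  apply: le_lt_trans (HN m n Hm Hn).
  have -> : complex.Re (u m) - complex.Re (u n) = complex.Re (u m - u n) by case: (u m); case: (u n).
  exact: nc_Re.
have cIm : cvgn (fun n => complex.Im (u n)).
  apply: cauchyR => e /H [N HN]; exists N => m n Hm Hn.
  apply: le_lt_trans (HN m n Hm Hn).
  have -> : complex.Im (u m) - complex.Im (u n) = complex.Im (u m - u n) by case: (u m); case: (u n).
  exact: nc_Im.
exists (limn (fun n => complex.Re (u n)) +i* limn (fun n => complex.Im (u n))) => e e0.
have e2 : 0 < e / 2 by rewrite divr_gt0.
move/cvgrPdist_lt: cRe => /(_ _ e2) cRe.
move/cvgrPdist_lt: cIm => /(_ _ e2) cIm.
near=> N.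
have h : forall x : R[i], forall a b : R, normc ((a +i* b) - x) <= `|a - complex.Re x| + `|b - complex.Im x|.
  by move=> [c d] a b; apply: nc_cplx.
apply: le_lt_trans (h _ _ _) _.
have -> : e = e / 2 + e / 2 by rewrite -splitr.
apply: ltrD; near: N; assumption.
Unshelve. all: by end_near. Qed.

Definition interl (R : realType) (al be : nat -> R) :=
  forall k, [/\ 0 < be k, be k < al k & al k.+1 < be k].

Lemma be_gt_al (R : realType) (al be : nat -> R) : interl al be ->
  forall i j, (i < j)%N -> al j < be i.
Proof.
move=> H i j; elim: j => // j IH; rewrite ltnS leq_eqVlt => /orP[/eqP <- | ij].
  by case: (H i).
case: (H j) => _ h1 h2; apply: lt_trans h2 (lt_trans h1 (IH ij)).
Qed.

Lemma al_lt (R : realType) (al be : nat -> R) : interl al be ->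
  forall i j, (i < j)%N -> al j < al i.
Proof. by move=> H i j ij; case: (H i) => _ h _; apply: lt_trans (be_gt_al H ij) h. Qed.

Lemma al_pos (R : realType) (al be : nat -> R) : interl al be -> forall k, 0 < al k.
Proof. by move=> H k; case: (H k) => h1 h2 _; apply: lt_trans h1 h2. Qed.

Lemma al_le0 (R : realType) (al be : nat -> R) : interl al be -> forall k, al k <= al 0.
Proof. by move=> H [|k] //; apply/ltW/(al_lt H). Qed.

Lemma al_inj (R : realType) (al be : nat -> R) : interl al be ->
  forall i j, i != j -> al i != al j.
Proof.
move=> H i j; rewrite neq_ltn => /orP[] ij.
  by rewrite gt_eqF // (al_lt H ij).
by rewrite lt_eqF // (al_lt H ij).
Qed.

Lemma fac_pos (R : realType) (al be : nat -> R) : interl al be ->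
  forall n k, k != n -> 0 < (al n - be k) / (al n - al k).
Proof.
move=> H n k; rewrite neq_ltn => /orP[] kn.
  have h1 := be_gt_al H kn; have h2 := al_lt H kn.
  by rewrite -mulrNN -invrN divr_gt0 // oppr_gt0 subr_lt0.
have h1 := be_gt_al H kn; case: (H k) => _ h2 _; case: (H n) => _ h3 _.
rewrite divr_gt0 // subr_gt0 ?(al_lt H kn) //.
exact: lt_trans h2 (lt_trans h1 h3).
Qed.

Lemma fac_ge1 (R : realType) (al be : nat -> R) : interl al be ->
  forall n k, (n < k)%N -> 1 <= (al n - be k) / (al n - al k).
Proof.
move=> H n k nk; have h1 := be_gt_al H nk; case: (H k) => _ h2 _.
have d : 0 < al n - al k by rewrite subr_gt0 (al_lt H nk).
by rewrite ler_pdivlMr // mul1r lerD2l lerN2 ltW.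
Qed.

Lemma cpart_pos (R : realType) (al be : nat -> R) : interl al be ->
  forall N n, 0 < cpart al be N n.
Proof.
move=> H N n; rewrite /cpart mulr_gt0 //.
  by case: (H n) => _ h _; rewrite subr_gt0.
by apply: prodr_gt0 => k kn; apply: fac_pos.
Qed.

Lemma cpart_mono (R : realType) (al be : nat -> R) : interl al be ->
  forall N n, (n < N)%N -> cpart al be N n <= cpart al be N.+1 n.
Proof.
move=> H N n nN; rewrite cpartS // ler_peMr ?(ltW (cpart_pos H _ _)) //.
exact: fac_ge1.
Qed.

Lemma sum0 (R : realType) (al be : nat -> R) : interl al be ->
  forall N, \sum_(n < N) cpart al be N n / al n <= 1.
Proof.
move=> H N.
have := @pfrac _ al be N (fun i j _ _ => al_inj H (i:=i) (j:=j)) 0.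
move=> /(_ (fun k _ => negbT (lt_eqF (al_pos H k)))).
move=> E.
have -> : \sum_(n < N) cpart al be N n / al n = 1 - \prod_(k < N) ((0 - be k) / (0 - al k)).
  by rewrite E opprB addrC subrK; apply: eq_bigr => n _; rewrite subr0.
rewrite lerBlDr lerDl.
by apply: prodr_ge0 => k _; rewrite -mulrNN -invrN !sub0r !opprK divr_ge0 // ltW //;
  [case: (H k) | exact: al_pos H k].
Qed.

Lemma cpart_le (R : realType) (al be : nat -> R) : interl al be ->
  forall N n, (n < N)%N -> cpart al be N n / al n <= 1.
Proof.
move=> H N n nN; apply: le_trans (sum0 H N).
rewrite (bigD1 (Ordinal nN)) //= lerDl sumr_ge0 // => i _.
by rewrite divr_ge0 // ltW // ?(cpart_pos H) ?(al_pos H).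
Qed.

Lemma cpart_mono2 (R : realType) (al be : nat -> R) : interl al be ->
  forall n N M, (n < N)%N -> (N <= M)%N -> cpart al be N n <= cpart al be M n.
Proof.
move=> H n N M nN; elim: M => [|M IH]; first by rewrite leqn0 => /eqP ->.
rewrite leq_eqVlt => /orP[/eqP -> //| ]; rewrite ltnS => NM.
apply: le_trans (IH NM) _; apply: cpart_mono => //; exact: leq_trans nN NM.
Qed.

Lemma a_cvg (R : realType) (al be : nat -> R) : interl al be ->
  forall n, cvgn (fun N => cpart al be N n).
Proof.
move=> H n.
set v := fun m => cpart al be (m + n.+1) n.
have Hv : nondecreasing_seq v.
  apply/nondecreasing_seqP => m; rewrite /v addSn; apply: cpart_mono => //.
  by rewrite addnS ltnS leq_addl.
have Hb : has_ubound (range v).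
  exists (al n) => _ [m _ <-]; rewrite /v.
  have := cpart_le H (N := (m + n.+1)%N) (n := n).
  by rewrite ler_pdivrMr ?mul1r ?(al_pos H) //; apply; rewrite addnS ltnS leq_addl.
have := nondecreasing_cvgn Hv Hb.
rewrite (@cvg_shiftn n.+1 _ (fun N => cpart al be N n)) => /cvgP; exact.
Qed.

Lemma a_ge (R : realType) (al be : nat -> R) : interl al be ->
  forall n N, (n < N)%N -> cpart al be N n <= limn (fun N => cpart al be N n).
Proof.
move=> H n N nN; apply: limr_ge; first exact: a_cvg.
by exists N => // M /= NM; apply: cpart_mono2.
Qed.

Lemma sum_cvg (R : realType) (f : nat -> nat -> R) (l : nat -> R) M :
  (forall n, f n @ \oo --> l n) ->
  (fun N => \sum_(n < M) f n N) @ \oo --> \sum_(n < M) l n.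
Proof.
move=> Hf; elim: M => [|M IH].
  rewrite big_ord0; under eq_fun do rewrite big_ord0; exact: cvg_cst.
rewrite big_ord_recr /=; under eq_fun do rewrite big_ord_recr /=.
exact: cvgD.
Qed.

Lemma split_sum (R : realType) (f : nat -> R) M N : (M <= N)%N ->
  \sum_(n < N) f n = \sum_(n < M) f n + \sum_(M <= n < N) f n.
Proof. by move=> MN; rewrite -!(big_mkord xpredT) (@big_cat_nat _ _ _ M 0 N). Qed.

Lemma sum_sub_le (R : realType) (f : nat -> R) M N : (M <= N)%N ->
  (forall n, 0 <= f n) -> \sum_(n < M) f n <= \sum_(n < N) f n.
Proof.
move=> MN f0; rewrite (split_sum f MN) lerDl.
by apply: sumr_ge0.
Qed.

Definition acoef (R : realType) (al be : nat -> R) n := limn (fun N => cpart al be N n).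
Definition bsum (R : realType) (al be : nat -> R) M := \sum_(n < M) acoef al be n / al n.

Lemma acoef_pos (R : realType) (al be : nat -> R) : interl al be ->
  forall n, 0 < acoef al be n.
Proof. by move=> H n; apply: lt_le_trans (a_ge H (ltnSn n)); apply: cpart_pos. Qed.

Lemma bsum_le1 (R : realType) (al be : nat -> R) : interl al be ->
  forall M, bsum al be M <= 1.
Proof.
move=> H M.
have hc : (fun N => \sum_(n < M) cpart al be N n / al n) @ \oo --> bsum al be M.
  apply: (@sum_cvg _ (fun n N => cpart al be N n / al n) (fun n => acoef al be n / al n)) => n; apply: cvgMr_tmp; rewrite /acoef; exact: (a_cvg H (n:=n)).
rewrite -(cvg_lim _ hc) //; apply: limr_le; first by apply/cvg_ex; eexists; exact: hc.
exists M => // N /= MN; apply: le_trans (sum0 H N).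
apply: (@sum_sub_le _ (fun n => cpart al be N n / al n)) => // n.
by rewrite divr_ge0 // ltW // ?(cpart_pos H) ?(al_pos H).
Qed.

Lemma bsum_cvg (R : realType) (al be : nat -> R) : interl al be ->
  cvgn (bsum al be) /\ forall M, bsum al be M <= limn (bsum al be).
Proof.
move=> H.
have Hv : nondecreasing_seq (bsum al be).
  apply/nondecreasing_seqP => m; rewrite /bsum big_ord_recr /= lerDl.
  by rewrite divr_ge0 // ltW // ?(acoef_pos H) ?(al_pos H).
have Hb : has_ubound (range (bsum al be)).
  by exists 1 => _ [m _ <-]; apply: bsum_le1.
have c : cvgn (bsum al be) by apply/cvg_ex; eexists; exact: nondecreasing_cvgn Hv Hb.
split => //; exact: nondecreasing_cvgn_le.
Qed.

Lemma r_small (R : realType) (al be : nat -> R) : interl al be ->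
  forall e, 0 < e -> \forall N \near \oo,
    \sum_(n < N) (acoef al be n - cpart al be N n) / al n < e.
Proof.
move=> H e e0.
have e2 : 0 < e / 2 by rewrite divr_gt0.
have [cB leB] := bsum_cvg H.
set Bl := limn (bsum al be) in leB cB.
have [M0 _ HM0] := (cvgrPdist_lt _ _).1 cB _ e2.
have hM := HM0 M0 (leqnn M0); move: hM => /= hM.
set M := M0 in hM.
have hg : (fun N => \sum_(n < M) (acoef al be n - cpart al be N n) / al n) @ \oo --> 
          \sum_(n < M) (0 : R).
  apply: (@sum_cvg _ (fun n N => (acoef al be n - cpart al be N n) / al n) (fun _ => 0)) => n.
  have := cvgMr_tmp (b := (al n)^-1) (cvgB (cvg_cst (acoef al be n)) (a_cvg H (n:=n))).
  by rewrite /acoef subrr mul0r; apply; apply: nat_filter.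
rewrite big1_eq in hg.
have := (cvgrPdist_lt _ _).1 hg _ e2.
move=> hg2; near=> N.
have MN : (M <= N)%N by near: N; exists M.
rewrite (split_sum (fun n => (acoef al be n - cpart al be N n) / al n) MN).
have h1 : \sum_(n < M) (acoef al be n - cpart al be N n) / al n < e / 2.
  have h0 : `|0 - \sum_(n < M) (acoef al be n - cpart al be N n) / al n| < e / 2.
    by near: N; exact: hg2.
  by apply: le_lt_trans h0; rewrite sub0r normrN ler_norm.
have h2 : \sum_(M <= n < N) (acoef al be n - cpart al be N n) / al n <= Bl - bsum al be M.
  apply: (@le_trans _ _ (\sum_(M <= n < N) acoef al be n / al n)).
    apply: ler_sum => n _; rewrite ler_pM2r ?invr_gt0 ?(al_pos H) //.
    by rewrite lerBlDr lerDl ltW // (cpart_pos H).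
  rewrite lerBrDl -(split_sum (fun n => acoef al be n / al n) MN); exact: leB.
have h3 : Bl - bsum al be M < e / 2 by apply: le_lt_trans (ler_norm _) hM.
by rewrite (splitr e); apply: lt_le_trans (ltrD h1 (le_lt_trans h2 h3)) _.
Unshelve. all: by end_near. Qed.

Lemma nc_big (R : realType) (I : Type) (r : seq I) (P : pred I) (f : I -> R[i]) :
  normc (\sum_(i <- r | P i) f i) <= \sum_(i <- r | P i) normc (f i).
Proof.
apply: (big_ind2 (fun x y => normc x <= y)).
- by rewrite /= expr0n /= addr0 sqrtr0.
- by move=> x1 x2 y1 y2 h1 h2; apply: le_trans (nc_tri _ _) (lerD h1 h2).
- by [].
Qed.

Lemma split_sumZ (V : zmodType) (f : nat -> V) M N : (M <= N)%N ->
  \sum_(n < N) f n = \sum_(n < M) f n + \sum_(M <= n < N) f n.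
Proof. by move=> MN; rewrite -!(big_mkord xpredT) (@big_cat_nat _ _ _ M 0 N). Qed.

Definition PhiP (R : realType) (al be : nat -> R) (z : R[i]) N :=
  \prod_(k < N) ((z - (be k)%:C) / (z - (al k)%:C)).
Definition SP (R : realType) (al be : nat -> R) (z : R[i]) N :=
  \sum_(n < N) ((acoef al be n)%:C / ((al n)%:C - z)).

Lemma cpartC (R : realType) (al be : nat -> R) N n :
  cpart (fun k => (al k)%:C) (fun k => (be k)%:C) N n = (cpart al be N n)%:C.
Proof.
rewrite /cpart rmorphM rmorphB rmorph_prod; congr (_ * _).
by apply: eq_bigr => k _; rewrite fmorph_div !rmorphB.
Qed.

Lemma PhiP_pf (R : realType) (al be : nat -> R) : interl al be ->
  forall z : R[i], (forall k, z != (al k)%:C) ->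
  forall N, PhiP al be z N = 1 - \sum_(n < N) (cpart al be N n)%:C / ((al n)%:C - z).
Proof.
move=> H z Hz N; rewrite /PhiP.
rewrite (@pfrac _ (fun k => (al k)%:C) (fun k => (be k)%:C) N).
- by congr (_ - _); apply: eq_bigr => n _; rewrite cpartC.
- move=> i j _ _ ij; apply/negP => /eqP /complexI /eqP; apply/negP.
  exact: al_inj.
- by move=> k _; apply: Hz.
Qed.

Lemma C_hausdorff (R : realType) : hausdorff_space R[i].
Proof. exact: (@norm_hausdorff _ (R[i]^o)). Qed.

Lemma cvgC (R : realType) (u : nat -> R[i]) (l : R[i]) :
  (forall e : R, 0 < e -> \forall N \near \oo, normc (l - u N) < e) -> u @ \oo --> l.
Proof.
move=> H; apply/cvg_ballP => eps.
case: eps => a b; rewrite ltcE /= => /andP[/eqP -> a0].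
apply: filterS (H a a0) => N.
by rewrite /ball /= normCE ltcR.
Qed.

Lemma limC (R : realType) (u : nat -> R[i]) (l : R[i]) : u @ \oo --> l -> lim (u @ \oo) = l.
Proof. by move=> H; apply: (cvg_lim (@C_hausdorff R) H). Qed.

Lemma key (R : realType) (al be : nat -> R) (H : interl al be) (z : R[i]) (d : R)
  (d0 : 0 < d) (Hd : forall n, d <= normc ((al n)%:C - z)) :
  exists L : R[i],
    [/\ SP al be z @ \oo --> L, PhiP al be z @ \oo --> 1 - L &
        forall N, normc (L - SP al be z N) <= al 0 / d * (limn (bsum al be) - bsum al be N)].
Proof.
set c := al 0 / d.
have c0 : 0 < c by rewrite divr_gt0 // (al_pos H).
have Hz : forall k, z != (al k)%:C.
  move=> k; apply/negP => /eqP zk; have := Hd k; rewrite zk subrr.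
  by rewrite /= expr0n /= addr0 sqrtr0 leNgt d0.
have term : forall n x, 0 <= x -> normc (x%:C / ((al n)%:C - z)) <= c * (x / al n).
  move=> n x x0; rewrite nc_M nc_V nc_real ger0_norm //.
  have w0 : 0 < normc ((al n)%:C - z) by apply: lt_le_trans d0 (Hd n).
  have an := al_pos H n.
  apply: (@le_trans _ _ (x / d)).
    by rewrite ler_wpM2l // lef_pV2 ?posrE.
  have -> : x / d = (x / al n) * (al n / d).
    by field; rewrite (gt_eqF an) (gt_eqF d0).
  rewrite mulrC /c; apply: ler_wpM2r; first by rewrite divr_ge0 // ltW.
  by rewrite ler_pM2r ?invr_gt0 // (al_le0 H).
have bd : forall N M, (N <= M)%N ->
    normc (SP al be z M - SP al be z N) <= c * (bsum al be M - bsum al be N).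
  move=> N M NM; rewrite /SP /bsum.
  rewrite (split_sumZ (fun n => (acoef al be n)%:C / ((al n)%:C - z)) NM).
  rewrite (split_sum (fun n => acoef al be n / al n) NM).
  rewrite [X in normc X]addrC addKr [X in _ <= _ * X]addrC addKr.
  apply: le_trans (nc_big _ _ _) _; rewrite mulr_sumr; apply: ler_sum => n _.
  by apply: term; apply: ltW; apply: acoef_pos.
have [cB leB] := bsum_cvg H.
set Bl := limn (bsum al be) in leB cB.
have cauchy : forall e, 0 < e -> exists N, forall m n, (N <= m)%N -> (N <= n)%N ->
    normc (SP al be z m - SP al be z n) < e.
  move=> e e0.
  have ec : 0 < e / c by rewrite divr_gt0.
  have [M0 _ HM0] := (cvgrPdist_lt _ _).1 cB _ ec.
  have gen : forall m n, (M0 <= n)%N -> (n <= m)%N ->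
      normc (SP al be z m - SP al be z n) < e.
    move=> m n Mn nm; apply: le_lt_trans (bd _ _ nm) _.
    rewrite -ltr_pdivlMl // mulrC.
    apply: le_lt_trans (_ : Bl - bsum al be n < e / c).
      by rewrite lerD2r; apply: leB.
    by apply: le_lt_trans (ler_norm _) (HM0 n Mn).
  exists M0 => m n Mm Mn; case: (leqP n m) => nm; first exact: gen.
  by rewrite -opprB nc_N; apply: gen => //; apply: ltnW.
have [L HL] := cauchyC cauchy.
exists L; split.
- exact: cvgC.
- apply: cvgC => e e0.
  have e2 : 0 < e / 2 by rewrite divr_gt0.
  have e2c : 0 < e / 2 / c by rewrite divr_gt0.
  have hr := r_small H e2c.
  have hl := HL _ e2.
  near=> N.
  rewrite PhiP_pf // opprB addrA addrAC.
  set Sc := \sum_(n < N) _.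
  have -> : 1 - L - 1 + Sc = (Sc - SP al be z N) + - (L - SP al be z N).
    by ring.
  apply: le_lt_trans (nc_tri _ _) _; rewrite nc_N (splitr e); apply: ltrD; last by near: N.
  rewrite /Sc /SP -sumrB.
  apply: le_lt_trans (nc_big _ _ _) _.
  apply: (@le_lt_trans _ _ (c * \sum_(n < N) (acoef al be n - cpart al be N n) / al n)).
    rewrite mulr_sumr; apply: ler_sum => n _.
    have -> : (cpart al be N n)%:C / ((al n)%:C - z) - (acoef al be n)%:C / ((al n)%:C - z)
      = - ((acoef al be n - cpart al be N n)%:C / ((al n)%:C - z)).
      by rewrite rmorphB mulrBl opprB.
    rewrite nc_N; apply: term; rewrite subr_ge0 /acoef; idtac.
    apply: (a_ge H). exact: ltn_ord.
  rewrite -ltr_pdivlMl // mulrC; near: N; exact: hr.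
- move=> N; apply/ler_addgt0Pr => e e0.
  have [m0 _ Hm0] := HL e e0.
  set m := maxn m0 N.
  have hm := Hm0 m (leq_maxl m0 N).
  have Nm : (N <= m)%N by apply: leq_maxr.
  have -> : L - SP al be z N = (L - SP al be z m) + (SP al be z m - SP al be z N).
    by rewrite addrA subrK.
  apply: le_trans (nc_tri _ _) _; rewrite addrC; apply: lerD; last exact: ltW.
  apply: le_trans (bd _ _ Nm) _; rewrite ler_pM2l // lerD2r; exact: leB.
Unshelve. all: by end_near. Qed.

Lemma nc_pos (R : realType) (x : R[i]) : x != 0 -> 0 < normc x.
Proof.
move=> x0; rewrite lt_def nc_ge0 andbT; apply/negP => /eqP h.
by move: x0; rewrite (ComplexField.Normc.eq0_normc h) eqxx.
Qed.

Lemma delta_pt (R : realType) (al : nat -> R) (hal : al @ \oo --> 0) (z : R[i])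
  (z0 : z != 0) (Hz : forall k, z != (al k)%:C) :
  exists2 d, 0 < d & forall n, d <= normc ((al n)%:C - z).
Proof.
have fin : forall M, exists2 d, 0 < d & forall n, (n < M)%N -> d <= normc ((al n)%:C - z).
  elim => [|M [d d0 Hd]]; first by exists 1.
  have p : 0 < normc ((al M)%:C - z) by apply: nc_pos; rewrite subr_eq0 eq_sym.
  exists (Num.min d (normc ((al M)%:C - z))); first by rewrite lt_min d0 p.
  move=> n; rewrite ltnS leq_eqVlt => /orP[/eqP -> | nM]; first by rewrite ge_min lexx orbT.
  by rewrite ge_min Hd.
have nz := nc_pos z0.
have nz2 : 0 < normc z / 2 by rewrite divr_gt0.
have [N0 _ HN0] := (cvgrPdist_lt _ _).1 hal _ nz2.
have [d d0 Hd] := fin N0.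
exists (Num.min d (normc z / 2)); first by rewrite lt_min d0 nz2.
move=> n; case: (ltnP n N0) => nN; first by rewrite ge_min Hd.
rewrite ge_min; apply/orP; right.
have h := HN0 n nN; rewrite /= sub0r normrN in h.
have t : normc z <= normc ((al n)%:C - z) + `|al n|.
  rewrite -nc_real -(nc_N ((al n)%:C - z)) opprB.
  by apply: le_trans (nc_tri _ _); rewrite subrK.
lra.
Qed.

Lemma delta_cpt (R : realType) (al : nat -> R) (hal : al @ \oo --> 0) (K : set R[i])
  (cK : compact K) (HK : forall z, K z -> z != 0 /\ forall k, z != (al k)%:C) :
  exists2 d, 0 < d & forall z, K z -> forall n, d <= normc ((al n)%:C - z).
Proof.
have loc : forall x, K x -> \forall x' \near x & i \near \oo,
    (fun (i : nat) x => forall n, (i.+1%:R)^-1 <= normc ((al n)%:C - x)) i x'.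
  move=> x Kx; have [h0 hk] := HK x Kx.
  have [d d0 Hd] := delta_pt hal h0 hk.
  have d2 : 0 < d / 2 by rewrite divr_gt0.
  exists (ball x (d / 2)%:C, [set i : nat | (i.+1%:R)^-1 < d / 2]).
    split => /=; first by apply: nbhsx_ballx; rewrite ltcR.
    exact: (near_infty_natSinv_lt (PosNum d2)).
  case=> y i /= [bxy hi] n.
  move: bxy; rewrite /ball /= normCE ltcR => bxy.
  have t : normc ((al n)%:C - x) <= normc ((al n)%:C - y) + normc (x - y).
    rewrite -(nc_N (x - y)); apply: le_trans (nc_tri _ _).
    by rewrite opprB addrA subrK.
  have bxy' : normc (x - y) < d / 2 := bxy.
  have hd := Hd n.
  have h1 : d / 2 <= normc ((al n)%:C - x) - normc (x - y) by lra.
  have h2 : normc ((al n)%:C - x) - normc (x - y) <= normc ((al n)%:C - y).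
    by rewrite lerBlDr.
  exact: le_trans (ltW hi) (le_trans h1 h2).
have := (compact_near_coveringP K).1 cK nat \oo _ _ loc.
case=> N0 _ HN0.
exists (N0.+1%:R)^-1; first by rewrite invr_gt0 ltr0Sn.
by move=> z Kz; apply: (HN0 N0 (leqnn N0)).
Qed.


Unset Implicit Arguments.

(* Indices are shifted: lam 0, mu 0 are the paper's lambda_1, mu_1. *)
Theorem lemma4p7 (R : realType) (lam mu : nat -> R)
  (hlam0 : forall k, lam k != 0) (hmu0 : forall k, mu k != 0)
  (hlm : forall k, `|mu k| < `|lam k|)
  (hml : forall k, `|lam k.+1| < `|mu k|)
  (hlim : lam @ \oo --> 0) :
  (forall n, cvg (a_partial lam mu n @ \oo)) /\
  (forall z : R[i], ~ sigma_set lam z ->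
     cvg (Phi_partial lam mu z @ \oo) /\
     S_partial lam mu z @ \oo --> 1 - Phi lam mu z) /\
  (forall K : set R[i], compact K -> K `<=` ~` sigma_set lam ->
     forall e : R, 0 < e ->
       \forall N \near \oo, forall z, K z ->
         `|S_partial lam mu z N - (1 - Phi lam mu z)| < e%:C).
Proof.
set al := fun k => lam k ^+ 2.
set be := fun k => mu k ^+ 2.
have sq : forall x y : R, `|x| < `|y| -> x ^+ 2 < y ^+ 2.
  move=> x y h; rewrite -(real_normK (num_real x)) -(real_normK (num_real y)).
  by rewrite ltrXn2r.
have H : interl al be.
  move=> k; split; rewrite /al /be.
  - by rewrite lt_def sqr_ge0 sqrf_eq0 hmu0.
  - exact: sq.
  - exact: sq.
have hal : al @ \oo --> 0.
  have -> : al = (lam \* lam) by apply/funext => k; rewrite /al expr2.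
  have h := cvgM hlim hlim; rewrite mulr0 in h; exact: h.
have nsig : forall z, ~ sigma_set lam z -> z != 0 /\ forall k, z != (al k)%:C.
  move=> z hz; split; first by apply/eqP => z0; apply: hz; left.
  by move=> k; apply/eqP => zk; apply: hz; right; exists k.
have PhiE : forall z, Phi_partial lam mu z = PhiP al be z by [].
have SE : forall z, S_partial lam mu z = SP al be z by [].
split; first by move=> n; exact: (a_cvg H (n:=n)).
split.
  move=> z /nsig [z0 zk].
  have [d d0 Hd] := delta_pt hal z0 zk.
  have [L [hS hP _]] := key H d0 Hd.
  have PE : Phi lam mu z = 1 - L by rewrite /Phi PhiE; apply: limC.
  split; first by apply/cvg_ex; exists (1 - L); rewrite PhiE.
  rewrite PE (_ : 1 - (1 - L) = L); first exact: hS.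
  by rewrite opprB addrC subrK.
move=> K cK HK e e0.
have [d d0 Hd] := delta_cpt hal cK (fun z Kz => nsig z (HK z Kz)).
set c := al 0 / d.
have c0 : 0 < c by rewrite divr_gt0 // (al_pos H).
have [cB leB] := bsum_cvg H.
have ec : 0 < e / c by rewrite divr_gt0.
have hB := (cvgrPdist_lt _ _).1 cB _ ec.
near=> N => z Kz.
have [L [hS hP hU]] := key H d0 (Hd z Kz).
have PE : Phi lam mu z = 1 - L by rewrite /Phi PhiE; apply: limC.
rewrite PE (_ : 1 - (1 - L) = L); last by rewrite opprB addrC subrK.
rewrite normCE ltcR -opprB nc_N.
apply: le_lt_trans (hU N) _.
rewrite -/c -ltr_pdivlMl // mulrC.
have : `|limn (bsum al be) - bsum al be N| < e / c by near: N; exact: hB.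
by apply: le_lt_trans; apply: ler_norm.
Unshelve. all: by end_near. Qed.
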